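(* For sufficiently large $n$, every integer $k \ge 4\log_2 n+2$, and every tournament $T_k$ on $k$ vertices, Breaker has a winning strategy in the $(2:1)$ Maker–Breaker game $\mathcal{H}(T_k,n)$.
   Context: The game $\mathcal{H}(T_k,n)=(X,\mathcal{F}(T_k))$ has board $X=\{(u,v): u,v\in V(K_n),\ u\ne v\}$, the set of all $n(n-1)$ ordered pairs of distinct vertices. Its winning sets are $\mathcal{F}(T_k)=\{S\subseteq X : S \text{ is (the arc set of) a copy of } T_k\}$. In the $(2:1)$ Maker–Breaker game on $(X,\mathcal{F})$, the players alternately claim unclaimed elements of $X$, Maker claiming $2$ elements per round and Breaker $1$ element per round. Maker wins if she claims all elements of some winning set; otherwise Breaker wins. A tournament is a digraph with exactly one directed edge between each pair of distinct vertices. *)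

(* Defs.v *)
From mathcomp Require Import all_boot.
Set Implicit Arguments.
Unset Strict Implicit.
Unset Printing Implicit Defensive.

(* A position is the pair
   (M, B) of the sets claimed by Maker and by Breaker.  The game ends when the board is fully claimed; Maker wins iff
   she has claimed all elements of some winning set (since Maker's set only
   grows, it suffices to check this at the end). *)
Section MBGame.
Variables (X : finType) (D : {set X}) (F : {set {set X}}) (a b : nat).

Definition free (M B : {set X}) : {set X} := D :\: (M :|: B).

Definition maker_has_won (M : {set X}) : bool :=
  [exists W in F, W \subset M].

(* breaker_wins_M M B : from position (M,B) with Maker to move, Breaker has a
   strategy guaranteeing Maker never claims a winning set.
   breaker_wins_B M B : same, with Breaker to move. *)
Inductive breaker_wins_M : {set X} -> {set X} -> Prop :=
| bwM_end M B :
    free M B = set0 -> ~~ maker_has_won M -> breaker_wins_M M B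
| bwM_step M B :
    free M B != set0 ->
    (forall S : {set X}, S \subset free M B -> #|S| = minn a #|free M B| ->
        breaker_wins_B (M :|: S) B) ->
    breaker_wins_M M B
with breaker_wins_B : {set X} -> {set X} -> Prop :=
| bwB_end M B :
    free M B = set0 -> ~~ maker_has_won M -> breaker_wins_B M B
| bwB_step M B :
    free M B != set0 ->
    (exists2 S : {set X}, S \subset free M B & #|S| = minn b #|free M B| /\
        breaker_wins_M M (B :|: S)) ->
    breaker_wins_B M B.

Definition breaker_wins : Prop := breaker_wins_M set0 set0.
End MBGame.

Definition is_tournament (k : nat) (T : rel 'I_k) : Prop :=
  (forall i, ~~ T i i) /\ (forall i j, i != j -> T i j != T j i).

Definition H_board (n : nat) : {set 'I_n * 'I_n} :=
  [set p | p.1 != p.2].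

Definition copy_arcs (k n : nat) (T : rel 'I_k) (f : {ffun 'I_k -> 'I_n})
  : {set 'I_n * 'I_n} :=
  [set (f p.1, f p.2) | p in [set p : 'I_k * 'I_k | T p.1 p.2]].

Definition H_winning (k n : nat) (T : rel 'I_k) : {set {set 'I_n * 'I_n}} :=
  [set S | [exists f : {ffun 'I_k -> 'I_n}, injectiveb f && (S == copy_arcs T f)]].

(* Main.v *)
Require Import Defs.
From mathcomp Require Import all_boot all_order all_algebra.
From mathcomp Require Import zify ring lra.
Import Order.TTheory GRing.Theory Num.Theory.
Set Implicit Arguments.
Unset Strict Implicit.
Unset Printing Implicit Defensive.

Lemma disjU1 (T : finType) (A B : {set T}) z :
  [disjoint A & z |: B] = (z \notin A) && [disjoint A & B].
Proof.
rewrite -!setI_eq0 setIUr setU_eq0; congr (_ && _).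
apply/idP/idP => [/eqP H|H].
  apply/negP => zA; have : z \in A :&: [set z] by rewrite !inE zA eqxx.
  by rewrite H inE.
apply/eqP/setP=> x; rewrite !inE; case: (x =P z) => [->|]; by [rewrite (negbTE H) | rewrite andbF].
Qed.

Section Pot.
Local Open Scope ring_scope.
Variables (R : realFieldType) (s : R).
Hypothesis s1 : 1 <= s.
Hypothesis s2 : s ^+ 2 = 2.
Variables (X : finType) (D : {set X}) (F : {set {set X}}) (t : R).
Hypothesis ht : forall A, A \in F -> t <= s ^+ #|A|.

Definition phi (M A : {set X}) : R := s ^+ #|A :&: M|.
Definition Phi (M B : {set X}) := \sum_(A in F | [disjoint A & B]) phi M A.
Definition wt (M B : {set X}) (x : X) := \sum_(A in F | [disjoint A & B] && (x \in A)) phi M A.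

Lemma phi_ge0 M A : 0 <= phi M A.
Proof. by rewrite /phi exprn_ge0 // (le_trans ler01 s1). Qed.

Lemma wt_ge0 M B x : 0 <= wt M B x.
Proof. by apply: sumr_ge0 => A _; apply: phi_ge0. Qed.

Lemma Phi_split M B z : Phi M B = Phi M (z |: B) + wt M B z.
Proof.
rewrite /Phi /wt (bigID (fun A : {set X} => z \in A)) /= addrC; congr (_ + _).
  apply: eq_bigl => A; rewrite disjU1.
  by case: (A \in F); case: (z \in A); case: [disjoint A & B].
apply: eq_bigl => A.
by case: (A \in F); case: (z \in A); case: [disjoint A & B].
Qed.

Lemma wt_mono M B z x : wt M (z |: B) x <= wt M B x.
Proof.
rewrite /wt big_mkcond [X in _ <= X]big_mkcond /=; apply: ler_sum => A _; rewrite disjU1.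
case: (A \in F); case: (z \in A); case: [disjoint A & B]; case: (x \in A) => //=;
  exact: phi_ge0.
Qed.

Lemma wt_le_Phi M B x : wt M B x <= Phi M B.
Proof.
rewrite /wt /Phi big_mkcond [X in _ <= X]big_mkcond /=; apply: ler_sum => A _.
case: (A \in F); case: [disjoint A & B]; case: (x \in A) => //=; exact: phi_ge0.
Qed.

Lemma Phi_le_F B : Phi set0 B <= #|F|%:R.
Proof.
rewrite /Phi -sum1_card natr_sum big_mkcond [X in _ <= X]big_mkcond /=; apply: ler_sum => A _.
rewrite /phi setI0 cards0 expr0.
by case: (A \in F); case: [disjoint A & B].
Qed.

Lemma wt_eq M B x :
  wt M B x = \sum_(A in F | [disjoint A & B]) (x \in A)%:R * phi M A.
Proof.
rewrite /wt big_mkcond [RHS]big_mkcond /=; apply: eq_bigr => A _.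
by case: (A \in F); case: [disjoint A & B]; case: (x \in A); rewrite ?mul1r ?mul0r.
Qed.

Lemma pow_small j : (j <= 2)%N -> s ^+ j <= 1 + 2^-1 * j%:R.
Proof.
case: j => [|[|[|j]]] //= _.
- by rewrite expr0 mulr0 addr0.
- rewrite expr1.
  have h : s * s = 2 by rewrite -expr2.
  have s0 : 0 <= s by apply: le_trans s1.
  nra.
- rewrite s2; lra.
Qed.

Lemma Phi_inc (M B S : {set X}) : (#|S| <= 2)%N -> [disjoint M & S] ->
  Phi (M :|: S) B <= Phi M B + 2^-1 * \sum_(x in S) wt M B x.
Proof.
move=> hS dMS.
have key A : phi (M :|: S) A <= phi M A + 2^-1 * (#|A :&: S|%:R * phi M A).
  rewrite /phi.
  have -> : #|A :&: (M :|: S)| = (#|A :&: M| + #|A :&: S|)%N.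
    rewrite setIUr cardsU.
    have -> : A :&: M :&: (A :&: S) = set0.
      apply/setP => x; rewrite !inE.
      case xM: (x \in M); case xS: (x \in S); rewrite ?andbF ?andFb //=.
      by have := disjointFr dMS xM; rewrite xS.
    by rewrite cards0 subn0.
  rewrite exprD.
  have hj : (#|A :&: S| <= 2)%N by apply: leq_trans hS; apply: subset_leq_card; apply: subsetIr.
  have := pow_small hj.
  have p0 : 0 <= s ^+ #|A :&: M| by rewrite exprn_ge0 // (le_trans ler01 s1).
  move=> h.
  have := ler_wpM2l p0 h.
  rewrite mulrDr mulr1 => h2; apply: le_trans h2 _; rewrite lerD2l.
  by rewrite le_eqVlt; apply/orP; left; apply/eqP; ring.
have -> : \sum_(x in S) wt M B x =
   \sum_(A in F | [disjoint A & B]) #|A :&: S|%:R * phi M A.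
  under eq_bigr do rewrite wt_eq.
  rewrite exchange_big /=; apply: eq_bigr => A _.
  rewrite -mulr_suml; congr (_ * _).
  rewrite -sum1_card natr_sum big_mkcond [RHS]big_mkcond /=; apply: eq_bigr => x _.
  by rewrite !inE; case: (x \in A); case: (x \in S).
rewrite mulr_sumr -big_split /=; apply: ler_sum => A _; exact: key.
Qed.

Lemma ex_max (f : X -> R) (P : {set X}) : P != set0 ->
  exists2 z, z \in P & forall x, x \in P -> f x <= f z.
Proof.
case/set0Pn => z0 Pz0.
case: (@real_arg_maxP R X z0 (mem P) f Pz0) => [x _|z Pz H]; first exact: num_real.
by exists z.
Qed.

Lemma notwon (M B : {set X}) : [disjoint M & B] -> Phi M B < t -> ~~ maker_has_won F M.
Proof.
move=> dMB hP; apply/negP => /existsP [A /andP [AF AM]].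
have dAB : [disjoint A & B] by apply: disjointWl dMB.
have : phi M A <= Phi M B.
  rewrite /Phi (bigD1 A) /=; last by rewrite AF dAB.
  rewrite lerDl; apply: sumr_ge0 => *; exact: phi_ge0.
rewrite /phi (setIidPl AM) => h.
have := le_lt_trans (le_trans (ht AF) h) hP.
by rewrite ltxx.
Qed.

Definition IM (M B : {set X}) := exists c, [/\ 0 <= c, Phi M B + c < t &
  forall x, x \in Defs.free D M B -> wt M B x <= c].

Lemma main nf : forall M B, (#|Defs.free D M B| <= nf)%N -> [disjoint M & B] ->
  (Phi M B < t -> breaker_wins_B D F 2 1 M B) /\ (IM M B -> breaker_wins_M D F 2 1 M B).
Proof.
elim: nf => [|nf IH] M B hf hd.
  have f0 : Defs.free D M B = set0 by apply/eqP; rewrite -cards_eq0 -leqn0.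
  split => [hP|[c [c0 hc _]]]; constructor 1 => //; apply: (notwon hd) => //.
  by apply: le_lt_trans hc; rewrite lerDl.
case: (eqVneq (Defs.free D M B) set0) => [f0|fn0].
  split => [hP|[c [c0 hc _]]]; constructor 1 => //; apply: (notwon hd) => //.
  by apply: le_lt_trans hc; rewrite lerDl.
have fpos : (0 < #|Defs.free D M B|)%N by rewrite card_gt0.
split.
- move=> hP.
  have [z zf zmax] := ex_max (wt M B) fn0.
  apply: bwB_step => //.
  exists [set z]; first by rewrite sub1set.
  split; first by rewrite cards1; apply/esym/minn_idPl.
  have ef : Defs.free D M (z |: B) = Defs.free D M B :\ z.
    by apply/setP => x; rewrite /Defs.free !inE; case: (x =P z) => [->|]; rewrite ?orbT ?andbF //= ?andbT.
  have zM : z \notin M by move: zf; rewrite /Defs.free !inE negb_or => /andP [/andP [] ].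
  have := IH M (z |: B); rewrite ef => H.
  have hf' : (#|Defs.free D M B :\ z| <= nf)%N.
    by move: hf; rewrite (cardsD1 z (Defs.free D M B)) zf.
  have hd' : [disjoint M & z |: B] by rewrite disjU1 zM hd.
  rewrite setUC; apply: (proj2 (H hf' hd')).
  exists (wt M B z); split; first exact: wt_ge0.
    by rewrite -Phi_split.
  move=> x; rewrite ef in_setD1 => /andP [_ xf].
  by apply: le_trans (wt_mono _ _ _ _) (zmax x xf).
- case=> c [c0 hc hw].
  apply: bwM_step => // S hS hcard.
  have ef : Defs.free D (M :|: S) B = Defs.free D M B :\: S.
    apply/setP => x; rewrite /Defs.free !inE.
    by case: (x \in S); case: (x \in M); case: (x \in B); rewrite ?orbT ?andbF ?orbF.
  have SM : forall x, x \in S -> (x \notin M) && (x \notin B).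
    by move=> x /(subsetP hS); rewrite /Defs.free !inE negb_or => /andP [].
  have hf' : (#|Defs.free D (M :|: S) B| <= nf)%N.
    rewrite ef (cardsDS hS) hcard; move: hf fpos; lia.
  have hd' : [disjoint M :|: S & B].
    rewrite -setI_eq0 setIUl setU_eq0 setI_eq0 hd /=.
    apply/eqP/setP => x; rewrite !inE.
    by case xS: (x \in S) => //=; case/andP: (SM x xS) => _ /negbTE ->.
  apply: (proj1 (IH _ _ hf' hd')).
  have dMS : [disjoint M & S].
    rewrite -setI_eq0; apply/eqP/setP => x; rewrite !inE.
    by case xS: (x \in S); rewrite ?andbF //= ; case/andP: (SM x xS) => /negbTE ->.
  have hS2 : (#|S| <= 2)%N by rewrite hcard geq_minl.
  apply: le_lt_trans (Phi_inc B hS2 dMS) _.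
  apply: le_lt_trans hc; rewrite lerD2l.
  have : \sum_(x in S) wt M B x <= c * #|S|%:R.
    have h1 : \sum_(x in S) c = c * #|S|%:R by rewrite sumr_const mulr_natr. 
    rewrite -h1.
    apply: ler_sum => x xS.
    by apply: hw; apply: (subsetP hS).
  have : (#|S|%:R <= 2 :> R) by rewrite (ler_nat R #|S| 2).
  move: (\sum_(x in S) wt M B x) (#|S|%:R : R) => a b hb ha.
  have h2 : c * b <= c * 2 by rewrite ler_wpM2l.
  lra.
Qed.

Theorem potential : 2 * #|F|%:R < t -> breaker_wins D F 2 1.
Proof.
move=> hF.
have hd : [disjoint (set0 : {set X}) & set0] by rewrite -setI_eq0 setI0.
apply: (proj2 (main (leqnn _) hd)).
exists #|F|%:R; split; first exact: ler0n.
  apply: le_lt_trans hF; rewrite mulr2n mulrDl mul1r lerD2r; exact: Phi_le_F.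
move=> x _; apply: le_trans (wt_le_Phi _ _ _) (Phi_le_F _).
Qed.
End Pot.

Lemma card_tour k (T : rel 'I_k) : is_tournament T ->
  (#|[set p : 'I_k * 'I_k | T p.1 p.2]| * 2 = k * k - k)%N.
Proof.
case=> irr tot.
set P := [set p : 'I_k * 'I_k | T p.1 p.2].
set Q := [set p : 'I_k * 'I_k | T p.2 p.1].
have swi : injective (fun p : 'I_k * 'I_k => (p.2, p.1)) by move=> [a b] [c d] [-> ->].
have hQ : #|Q| = #|P|.
  rewrite -(card_preimset P swi); apply: eq_card => p; by rewrite !inE.
have hI : P :&: Q = set0.
  apply/setP => [[i j]]; rewrite !inE /=.
  case: (eqVneq i j) => [->|ne]; first by rewrite (negbTE (irr j)).
  by have := tot i j ne; case: (T i j); case: (T j i).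
set E := [set p : 'I_k * 'I_k | p.1 != p.2].
have hU : P :|: Q = E.
  apply/setP => [[i j]]; rewrite !inE /=.
  case: (eqVneq i j) => [->|ne]; first by rewrite (negbTE (irr j)).
  by have := tot i j ne; case: (T i j); case: (T j i).
have hE : #|E| = (k * k - k)%N.
  have hC : ~: E = [set (i, i) | i : 'I_k].
    apply/setP => [[i j]]; rewrite !inE /= negbK.
    apply/eqP/imsetP => [->|[x _ [-> ->]]] //; by exists j.
  have := cardsC E; rewrite hC card_imset; last by move=> a b [].
  by rewrite card_prod card_ord => <-; rewrite addnK.
have := cardsUI P Q; rewrite hU hI cards0 hQ addn0 hE; lia.
Qed.

Lemma card_copy n k (T : rel 'I_k) (f : {ffun 'I_k -> 'I_n}) : injective f ->
  #|copy_arcs T f| = #|[set p : 'I_k * 'I_k | T p.1 p.2]|.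
Proof.
move=> fi; rewrite /copy_arcs card_imset //.
by move=> [a b] [c d] /= [/fi -> /fi ->].
Qed.

Lemma card_F n k (T : rel 'I_k) : (#|H_winning n T| <= n ^ k)%N.
Proof.
have sub : H_winning n T \subset (copy_arcs T) @: [set: {ffun 'I_k -> 'I_n}].
  apply/subsetP => A; rewrite inE => /existsP [f /andP [_ /eqP ->]].
  by apply: imset_f; rewrite inE.
apply: leq_trans (subset_leq_card sub) _.
apply: leq_trans (leq_imset_card _ _) _.
by rewrite cardsT card_ffun !card_ord.
Qed.

Lemma arith n k m Fc : (2 <= n -> n ^ 4 * 4 <= 2 ^ k -> m * 2 = k * k - k ->
  Fc <= n ^ k -> 4 * Fc ^ 2 < 2 ^ m)%N.
Proof.
move=> n2 hk hm hF.
have k6 : 6 <= k.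
  have : 2 ^ 6 <= 2 ^ k.
    apply: leq_trans hk; have : 2 ^ 4 <= n ^ 4 by rewrite leq_exp2r.
    lia.
  by rewrite leq_exp2l.
apply: (@leq_ltn_trans (4 * (n ^ k) ^ 2)); first by rewrite leq_mul2l leq_exp2r.
rewrite -(@ltn_exp2r _ _ 2) //.
have e1 : ((4 * (n ^ k) ^ 2) ^ 2 * 4 ^ k = 16 * (n ^ 4 * 4) ^ k)%N.
  by rewrite expnMn -!expnM expnMn -expnM -mulnA (mulnC k (2*2)).
have e2 : ((2 ^ m) ^ 2 * 4 ^ k = 2 ^ (k * k) * 2 ^ k)%N.
  rewrite -expnM (_ : 4 = 2 ^ 2)%N // -expnM -expnD -expnD; congr (2 ^ _); nia.
rewrite -(@ltn_pmul2r (4 ^ k)) ?expn_gt0 // e1 e2.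
have k0 : 0 < k by lia.
have : (n ^ 4 * 4) ^ k <= (2 ^ k) ^ k by rewrite leq_exp2r.
rewrite -expnM => h.
have : 16 < 2 ^ k.
  have : 2 ^ 5 <= 2 ^ k by rewrite leq_exp2l //; lia.
  lia.
move: h; set a := 2 ^ (k * k); set b := 2 ^ k.
move=> h1 h2.
have a0 : 0 < a by rewrite expn_gt0.
nia.
Qed.

From mathcomp Require Import realalg.

Theorem mainTheorem6 :
  exists N : nat, forall n : nat, N <= n ->
  forall k : nat, n ^ 4 * 4 <= 2 ^ k ->
  forall T : rel 'I_k, is_tournament T ->
  breaker_wins (H_board n) (H_winning n T) 2 1.
Proof.
exists 2 => n n2 k hk T hT.
set m := #|[set p : 'I_k * 'I_k | T p.1 p.2]|.
have s0 : (0 <= Num.sqrt (2:realalg))%R := sqrtr_ge0 _.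
have s2 : (Num.sqrt (2:realalg) ^+ 2 = 2)%R by rewrite sqr_sqrtr // ler0n.
have s1 : (1 <= Num.sqrt (2:realalg))%R.
  move: s0 s2; set s := Num.sqrt _ => s0 s2; rewrite expr2 in s2; nra.
apply: (@potential realalg (Num.sqrt 2) s1 s2 _ _ _ (Num.sqrt 2 ^+ m)).
  move=> A; rewrite inE => /existsP [f /andP [/injectiveP fi /eqP ->]].
  by rewrite card_copy.
have hn := arith n2 hk (card_tour hT) (card_F n T).
rewrite ltNge; apply/negP => h.
have : ((Num.sqrt (2:realalg) ^+ m) ^+ 2 <= (2 * #|H_winning n T|%:R) ^+ 2)%R.
  by rewrite ler_pXn2r // nnegrE ?exprn_ge0 // mulr_ge0 // ler0n.
rewrite -exprM mulnC exprM s2 => h2.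
have : ((2 ^ m)%:R <= (4 * #|H_winning n T| ^ 2)%:R :> realalg)%R.
  rewrite natrX natrM natrX; move: h2; rewrite exprMn -natrX.
  by have -> : ((2:realalg) ^+ 2 = 4)%R by rewrite -natrX.
by rewrite ler_nat leqNgt hn.
Qed.
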